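(* Let $A,B\in\mathbb{Z}$ with $-1\leq A\leq B$, $B\geq 2$ and $2A<B+3$. Let $\mathcal{S}$ be the neighbor set of $T$ and $\mathcal{S}^{\ell}$ the neighbor set of $T^{\ell}$. Then $\mathcal{S}\subset\mathcal{S}^{\ell}\cup\{c\}\cup\mathcal{S}^{\ell}c$, where $\mathcal{S}^{\ell}c=\{s\circ c: s\in\mathcal{S}^{\ell}\}$.
   Context: Let $a(x,y)=(x+1,y)$, $b(x,y)=(x,y+1)$, $c(x,y)=(-x,-y)$ and let $\Gamma=\{a^pb^qc^r: p,q\in\mathbb{Z},\ r\in\{0,1\}\}$ (products are compositions). Let $M=\begin{pmatrix}0&-B\\1&-A\end{pmatrix}$, $g(\mathbf{x})=M\mathbf{x}+\left(\frac{B-1}{2},0\right)^T$, $\mathcal{D}=\{id,a,\dots,a^{B-2},c\}$ if $B\geq3$ and $\mathcal{D}=\{id,c\}$ if $B=2$, and let $T$ be the unique nonempty compact set with $g(T)=\bigcup_{\delta\in\mathcal{D}}\delta(T)$. Let $T^{\ell}$ be the unique nonempty compact set with $MT^{\ell}=\bigcup_{k=0}^{B-1}\left(T^{\ell}+(k,0)^T\right)$. The neighbor set of $T$ is $\mathcal{S}=\{\gamma\in\Gamma\setminus\{id\}: T\cap\gamma(T)\neq\emptyset\}$; the neighbor set of $T^{\ell}$ is $\mathcal{S}^{\ell}=\{a^pb^q\neq id: T^{\ell}\cap a^pb^q(T^{\ell})\neq\emptyset\}$ (translations by nonzero integer vectors $(p,q)$). *)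

(* Defs.v *)
From HB Require Import structures.
From mathcomp Require Import all_boot all_order all_algebra.
From mathcomp Require Import all_classical all_reals all_analysis.
Set Implicit Arguments. Unset Strict Implicit. Unset Printing Implicit Defensive.
Import Order.TTheory GRing.Theory Num.Theory.
Import numFieldNormedType.Exports.
Local Open Scope classical_set_scope.
Local Open Scope ring_scope.

Section Defs.
Variable R : realType.
Notation pt := (R * R)%type.

Definition amap (z : pt) : pt := (z.1 + 1, z.2).
Definition bmap (z : pt) : pt := (z.1, z.2 + 1).
Definition cmap (z : pt) : pt := (- z.1, - z.2).

Definition transl (p q : int) (z : pt) : pt := (z.1 + p%:~R, z.2 + q%:~R).

(* the element a^p b^q c^r of Gamma (r = true means r = 1), as a map
   (composition: c^r is applied first) *)
Definition gmap (g : int * int * bool) : pt -> pt :=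
  let: (p, q, r) := g in
  if r then transl p q \o cmap else transl p q.

Definition Mmap (A B : int) (z : pt) : pt :=
  (0 * z.1 - B%:~R * z.2, z.1 - A%:~R * z.2).
Definition gaff (A B : int) (z : pt) : pt :=
  ((Mmap A B z).1 + (B%:~R - 1) / 2, (Mmap A B z).2).

(* T is a (the) nonempty compact set with g(T) = U_{delta in D} delta(T),
   D = {id, a, ..., a^(B-2), c} (= {id, c} when B = 2) *)
Definition is_T (A B : int) (T : set pt) : Prop :=
  T !=set0 /\ compact T /\
  gaff A B @` T =
    [set z | exists k : nat, (k%:Z <= B - 2)%R /\ z \in transl k%:Z 0 @` T]
    `|` cmap @` T.

Definition is_Tl (A B : int) (Tl : set pt) : Prop :=
  Tl !=set0 /\ compact Tl /\
  Mmap A B @` Tl =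
    [set z | exists k : nat, (k%:Z <= B - 1)%R /\ z \in transl k%:Z 0 @` Tl].

Definition nbr (T : set pt) : set (int * int * bool) :=
  [set g | g != (0, 0, false) /\ (T `&` gmap g @` T) !=set0].

Definition nbrl (Tl : set pt) : set (int * int) :=
  [set pq | pq != (0, 0) /\ (Tl `&` transl pq.1 pq.2 @` Tl) !=set0].

End Defs.

(* Main.v *)
Require Import Defs.
From HB Require Import structures.
From mathcomp Require Import all_boot all_order all_algebra.
From mathcomp Require Import all_classical all_reals all_analysis.
From mathcomp Require Import zify ring lra.
Import Order.TTheory GRing.Theory Num.Theory.
Import numFieldNormedType.Exports.
Local Open Scope classical_set_scope.
Local Open Scope ring_scope.

Section Aux.
Variable R : realType.
Definition Qf (qa qb d1 d2 : R) := d1^+2 + qa*d1*d2 + qb*d2^+2.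

Lemma qcase1 (a b : R) : 2 <= b -> 1 <= 4*b - a^+2 ->
  exists qa qb k : R, [/\ 0 < k, 0 <= qb,
   (forall d1 d2, d1^+2 + d2^+2 <= k * Qf qa qb d1 d2) &
   (forall d1 d2, 2 * Qf qa qb d1 d2 <= Qf qa qb (- b * d2) (d1 - a * d2))].
Proof.
move=> hb hab; exists (-a), b, (6 + 2 * a^+2).
have Qge : forall d1 d2, (d1 - a*d2/2)^+2 + d2^+2/4 <= Qf (-a) b d1 d2.
  move=> d1 d2; rewrite /Qf.
  have : 0 <= (4*b - a^+2 - 1) * d2^+2 by apply: mulr_ge0; lra || nra.
  move=> h. 
  have -> : d1 ^+ 2 + - a * d1 * d2 + b * d2 ^+ 2 = (d1 - a*d2/2)^+2 + d2^+2/4 + (4*b - a^+2 - 1) * d2^+2 / 4 by field.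
  lra.
split.
- have : 0 <= a^+2 by apply: sqr_ge0.
  lra.
- lra.
- move=> d1 d2. have := Qge d1 d2.
  have h1 : 0 <= (d1 - a*d2/2)^+2 by apply: sqr_ge0.
  have h2 : d1^+2 <= 2 * (d1 - a*d2/2)^+2 + a^+2 * d2^+2 / 2.
    have : 0 <= (d1 - a * d2)^+2 by apply: sqr_ge0.
    move=> h; nra.
  have h3 : 0 <= a^+2 by apply: sqr_ge0.
  move=> hQ.
  have h4 : 0 <= a^+2 * (Qf (-a) b d1 d2 - ((d1 - a*d2/2)^+2 + d2^+2/4)) by apply: mulr_ge0; lra.
  have h5 : 0 <= a^+2 * (d1 - a*d2/2)^+2 by apply: mulr_ge0.
  have h6 : 0 <= d2^+2 by apply: sqr_ge0.
  lra.
- move=> d1 d2.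
  have -> : Qf (-a) b (- b * d2) (d1 - a * d2) = b * Qf (-a) b d1 d2 by rewrite /Qf; ring.
  have := Qge d1 d2. have : 0 <= (d1 - a*d2/2)^+2 by apply: sqr_ge0.
  have : 0 <= d2^+2 by apply: sqr_ge0.
  nra.
Qed.

Lemma qcase2 (a b : R) : 3 <= b -> 4 * b <= b^+2 - 2 * a^+2 + 4 ->
  exists qa qb k : R, [/\ 0 < k, 0 <= qb,
   (forall d1 d2, d1^+2 + d2^+2 <= k * Qf qa qb d1 d2) &
   (forall d1 d2, 2 * Qf qa qb d1 d2 <= Qf qa qb (- b * d2) (d1 - a * d2))].
Proof.
move=> hb; set s := b^+2 - 2 * a^+2 + 4 => hs.
exists 0, (s/4), 1; split.
- lra.
- lra.
- move=> d1 d2; rewrite /Qf mul1r mul0r mul0r addr0.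
  have : 0 <= d2^+2 by apply: sqr_ge0.
  nra.
- move=> d1 d2; rewrite /Qf !mul0r !addr0.
  set qb := s / 4.
  have hq : 2 < qb by rewrite /qb; lra.
  have hD : 0 <= s^+2 - 16 * b^+2.
    have -> : s^+2 - 16 * b^+2 = (s - 4 * b) * (s + 4 * b) by ring.
    apply: mulr_ge0; lra.
  have hkey : (qb - 2) * (qb * (d1 - a * d2)^+2 + (- b * d2)^+2 - 2 * (d1^+2 + qb * d2^+2))
     = ((qb - 2) * d1 - a * qb * d2)^+2 + (s^+2 - 16 * b^+2) / 8 * d2^+2.
    by rewrite /qb /s; field.
  have h1 : 0 <= ((qb - 2) * d1 - a * qb * d2)^+2 by apply: sqr_ge0.
  have h2 : 0 <= (s^+2 - 16 * b^+2) / 8 * d2^+2.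
    apply: mulr_ge0; [lra | apply: sqr_ge0].
  have h3 : 0 <= (qb - 2) * (qb * (d1 - a * d2)^+2 + (- b * d2)^+2 - 2 * (d1^+2 + qb * d2^+2)) by rewrite hkey; apply: addr_ge0.
  have h4 : 0 <= qb * (d1 - a * d2)^+2 + (- b * d2)^+2 - 2 * (d1^+2 + qb * d2^+2).
    rewrite (pmulr_rge0 _ (_ : 0 < qb - 2)) // in h3; lra.
  lra.
Qed.

Lemma qform_int (A B : int) : -1 <= A -> A <= B -> 2 <= B -> 2 * A < B + 3 ->
  exists qa qb k : R, [/\ 0 < k, 0 <= qb,
   (forall d1 d2, d1^+2 + d2^+2 <= k * Qf qa qb d1 d2) &
   (forall d1 d2, 2 * Qf qa qb d1 d2 <= Qf qa qb (- B%:~R * d2) (d1 - A%:~R * d2))].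
Proof.
move=> hA hAB hB h2A.
have [h|h] := ltrP (A*A) (4*B).
- apply: qcase1.
  + by move: hB; rewrite -(ler_int R).
  + have : (1:int) <= 4 * B - A * A by lia.
    by rewrite -(ler_int R) intrB !intrM.
- have hA7 : 7 <= A by nia.
  apply: qcase2.
  + have : (3:int) <= B by lia.
    by rewrite -(ler_int R).
  + have : 4 * B <= B * B - 2 * (A * A) + 4 by nia.
    move=> _.
    have a7 : (7:R) <= A%:~R by move: hA7; rewrite -(ler_int R).
    have e2 : ((2:int)%:~R : R) = 2 by [].
    have h2 : (2:R) * A%:~R <= B%:~R + 2.
      have : ((2*A)%:~R : R) <= (B+2)%:~R by rewrite ler_int; lia.
      by rewrite intrM intrD e2.
    have h1 : (0:R) <= (A%:~R - 7) * (A%:~R - 1) by apply: mulr_ge0; lra.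
    have h3 : (0:R) <= (B%:~R - 2 - (2 * A%:~R - 4)) * (B%:~R - 2 + (2 * A%:~R - 4)) by apply: mulr_ge0; lra.
    nra.
Qed.
End Aux.
Arguments Qf {R}.
Lemma nat_of_int_ge0 (z : int) : 0 <= z -> exists n : nat, n%:Z = z.
Proof. by case: z => [n|n] // _; exists n. Qed.

Lemma sq_lt_norm (R : realType) (d e : R) : 0 < e -> d^+2 < e^+2 -> `|d| < e.
Proof. move=> he hd; rewrite ltr_norml; apply/andP; split; nra. Qed.

Theorem lemma3p2 (R : realType) (A B : int)
  (hA : -1 <= A) (hAB : A <= B) (hB : 2 <= B) (h2A : 2 * A < B + 3)
  (T Tl : set (R * R)%type)
  (hT : is_T A B T) (hTl : is_Tl A B Tl) :
  forall g, g \in nbr T ->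
    (exists s, s \in nbrl Tl /\ gmap (R:=R) g = transl s.1 s.2)
    \/ gmap (R:=R) g = cmap (R:=R)
    \/ (exists s, s \in nbrl Tl /\ gmap (R:=R) g = transl s.1 s.2 \o cmap (R:=R)).
Proof.
case: hT => T0 [cT eT]; case: hTl => Tl0 [cTl eTl].
have hAB1 : (0:R) < A%:~R + B%:~R + 1.
  have : ((0:int)%:~R : R) < (A + B + 1)%:~R by rewrite ltr_int; lia.
  by rewrite !intrD.
pose w2 : R := - (B%:~R - 1) / (2 * (A%:~R + B%:~R + 1)).
pose w1 : R := (A%:~R + 1) * w2.
have hw1 : - B%:~R * w2 = (B%:~R - 1) / 2 + w1.
  by rewrite /w1 /w2; field; rewrite gt_eqF.
have hw2 : w1 - A%:~R * w2 = w2 by rewrite /w1; ring.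
pose Y := [set z : R * R | exists u, (T u \/ exists t, T t /\ u = cmap t)
                                   /\ z = (u.1 + w1, u.2 + w2)].
have Ystep : forall y, Y y -> exists y1 (k : nat), [/\ Y y1, k%:Z <= B - 1 &
     Mmap A B y = transl k%:Z 0 y1].
  have i1 : ((1:int)%:~R : R) = 1 by [].
  have i0 : ((0:int)%:~R : R) = 0 by [].
  move=> y [u [[Tu|[t [Tt ->]]] ->]].
  - have : (gaff A B @` T) (gaff A B u) by exists u.
    rewrite eT => -[[k [hk]]|[t' Tt' e]].
      rewrite in_setE => -[t' Tt' e].
      exists (t'.1 + w1, t'.2 + w2), k; split.
      + by exists t'; split; [left|].
      + lia.
      + move: e; rewrite /gaff /Mmap /transl /= => -[e1 e2].
        rewrite i0; congr (_, _); lra.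
    exists ((cmap t').1 + w1, (cmap t').2 + w2), 0%N; split.
    + by exists (cmap t'); split => //; right; exists t'.
    + lia.
    + move: e; rewrite /gaff /Mmap /transl /cmap /= => -[e1 e2].
      rewrite i0; congr (_, _); lra.
  - have : (gaff A B @` T) (gaff A B t) by exists t.
    rewrite eT => -[[k [hk]]|[t' Tt' e]].
      rewrite in_setE => -[t' Tt' e].
      have [n hn] : exists n : nat, n%:Z = B - 1 - k%:Z by apply: nat_of_int_ge0; lia.
      exists ((cmap t').1 + w1, (cmap t').2 + w2), n; split.
      + by exists (cmap t'); split => //; right; exists t'.
      + rewrite hn; lia.
      + move: e; rewrite /gaff /Mmap /transl /cmap /= => -[e1 e2].
        rewrite hn !intrB i0 i1; congr (_, _); lra.
    have [n hn] : exists n : nat, n%:Z = B - 1 by apply: nat_of_int_ge0; lia.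
    exists (t'.1 + w1, t'.2 + w2), n; split.
    + by exists t'; split; [left|].
    + rewrite hn; lia.
    + move: e; rewrite /gaff /Mmap /transl /cmap /= => -[e1 e2].
      rewrite hn !intrB i0 i1; congr (_, _); lra.
have Xstep : forall x1, Tl x1 -> forall k : nat, k%:Z <= B - 1 ->
    exists x, Tl x /\ Mmap A B x = transl k%:Z 0 x1.
  move=> x1 Tx1 k hk.
  have : (Mmap A B @` Tl) (transl k%:Z 0 x1).
    rewrite eTl; exists k; split => //; rewrite in_setE; by exists x1.
  by case=> x Tx e; exists x.
have bnd : forall S : set (R * R), compact S ->
    exists M : R, forall z, S z -> (-M <= z.1 <= M) /\ (-M <= z.2 <= M).
  move=> S cS.
  have := @compact_bounded R ((R^o * R^o)%type) S cS.
  case=> M [Mr HM].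
  exists (M+1) => z Sz.
  have := HM (M+1) ltac:(by rewrite ltrDl) z Sz.
  by rewrite /= prod_normE ge_max => /andP[h1 h2]; rewrite -!ler_norml.
have [MT hMT] := bnd T cT.
have [ML hML] := bnd Tl cTl.
have [qa [qb [kk [hk hqb hkQ hMQ]]]] := @qform_int R A B hA hAB hB h2A.
pose r := MT + ML + w1^+2 + w2^+2 + 2.
have dbnd : forall y x, Y y -> Tl x -> (-r <= y.1 - x.1 <= r) /\ (-r <= y.2 - x.2 <= r).
  move=> y x [u [hu ->]] Tx.
  have hu' : (-MT <= u.1 <= MT) /\ (-MT <= u.2 <= MT).
    case: hu => [Tu|[t [Tt ->]]]; first exact: hMT.
    have := hMT t Tt; rewrite /cmap /= => -[/andP[? ?] /andP[? ?]].
    split; apply/andP; split; lra.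
  have := hML x Tx.
  have : 0 <= (w1 - 1)^+2 by apply: sqr_ge0.
  have : 0 <= (w1 + 1)^+2 by apply: sqr_ge0.
  have : 0 <= (w2 - 1)^+2 by apply: sqr_ge0.
  have : 0 <= (w2 + 1)^+2 by apply: sqr_ge0.
  move: hu' => /= [/andP[? ?] /andP[? ?]] ? ? ? ? [/andP[? ?] /andP[? ?]].
  rewrite /r; split; apply/andP; split; nra.
pose K := r^+2 * (1 + (qa^+2 + 1)/2 + qb).
have K0 : 0 <= K.
  apply: mulr_ge0; first exact: sqr_ge0.
  have : 0 <= qa^+2 by apply: sqr_ge0.
  lra.
have Qbound : forall d1 d2, -r <= d1 <= r -> -r <= d2 <= r -> Qf qa qb d1 d2 <= K.
  move=> d1 d2 /andP[h1 h2] /andP[h3 h4].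
  have s1 : 0 <= (r - d1) * (r + d1) by apply: mulr_ge0; lra.
  have s2 : 0 <= (r - d2) * (r + d2) by apply: mulr_ge0; lra.
  have s3 : 0 <= (qa * d1 - d2)^+2 by apply: sqr_ge0.
  have s4 : 0 <= qa^+2 * ((r - d1) * (r + d1)) by apply: mulr_ge0; first exact: sqr_ge0.
  have s5 : 0 <= qb * ((r - d2) * (r + d2)) by apply: mulr_ge0.
  rewrite /Qf /K; lra.
have iter : forall n : nat, forall y, Y y ->
    exists x, Tl x /\ Qf qa qb (y.1 - x.1) (y.2 - x.2) * 2^+n <= K.
  elim=> [|n IH] y Yy.
    case: Tl0 => x Tx; exists x; split => //; rewrite expr0 mulr1.
    by have [? ?] := dbnd y x Yy Tx; apply: Qbound.
  have [y1 [k [Yy1 hk1 ey]]] := Ystep y Yy.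
  have [x1 [Tx1 hx1]] := IH y1 Yy1.
  have [x [Tx ex]] := Xstep x1 Tx1 k hk1.
  exists x; split => //.
  move: ey ex; rewrite /Mmap /transl => -[ey1 ey2] [ex1 ex2].
  have e1 : y1.1 - x1.1 = - B%:~R * (y.2 - x.2) by lra.
  have e2 : y1.2 - x1.2 = (y.1 - x.1) - A%:~R * (y.2 - x.2) by lra.
  rewrite e1 e2 in hx1.
  have p : (0:R) < 2^+n by apply: exprn_gt0.
  have -> : Qf qa qb (y.1 - x.1) (y.2 - x.2) * 2 ^+ n.+1 =
     (2 * Qf qa qb (y.1 - x.1) (y.2 - x.2)) * 2 ^+ n by rewrite exprS; ring.
  apply: le_trans hx1; apply: ler_wpM2r; [exact: ltW | exact: hMQ].
have YTl : forall y, Y y -> Tl y.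
  move=> y Yy.
  have clTl : closed Tl by apply: compact_closed => //; exact: norm_hausdorff.
  apply: clTl => N /nbhs_ballP [e /= e0 sub].
  have [n hn] : exists n : nat, kk * K / e^+2 < n%:R.
    exists (Num.bound (kk * K / e^+2)); apply: archi_boundP.
    apply: divr_ge0; [exact: mulr_ge0 (ltW hk) K0 | exact: sqr_ge0].
  have h2n : (n%:R : R) <= 2^+n.
    by rewrite -natrX ler_nat ltnW // ltn_expl.
  have [x [Tx hx]] := iter n y Yy.
  exists x; split => //; apply: sub.
  have e20 : 0 < e^+2 by apply: exprn_gt0.
  have hq1 : kk * K < e^+2 * n%:R by rewrite -ltr_pdivrMl // mulrC.
  have p : (0:R) < 2^+n by apply: exprn_gt0.
  set Q := Qf qa qb (y.1 - x.1) (y.2 - x.2) in hx.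
  have hq2 : kk * Q < e^+2.
    have : kk * Q * 2^+n < e^+2 * 2^+n.
      have : kk * (Q * 2^+n) <= kk * K by apply: ler_wpM2l => //; exact: ltW.
      have : e^+2 * n%:R <= e^+2 * 2^+n by apply: ler_wpM2l => //; exact: ltW.
      move=> ? ?; rewrite -mulrA; lra.
    by rewrite ltr_pM2r.
  have := hkQ (y.1 - x.1) (y.2 - x.2); rewrite -/Q => hQ.
  have q1 : 0 <= (y.1 - x.1)^+2 by apply: sqr_ge0.
  have q2 : 0 <= (y.2 - x.2)^+2 by apply: sqr_ge0.
  rewrite /ball /= /prod_ball -!ball_normE /ball_ /=.
  split; apply: sq_lt_norm => //; lra.
move=> [[p q] rr]; rewrite in_setE /nbr /= => -[gne [z [Tz [t Tt ezt]]]].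
have Yz : Y (z.1 + w1, z.2 + w2) by exists z; split; [left|].
case: rr gne ezt => gne ezt.
- case: (eqVneq (p, q) (0, 0)) => [[-> ->]|pq0].
    right; left; apply: funext => v /=.
    by rewrite /transl /cmap /= !mulr0z !addr0.
  right; right; exists (p, q); split => //.
  rewrite in_setE /nbrl /=; split => //.
  exists (z.1 + w1, z.2 + w2); split; first exact: YTl.
  exists ((cmap t).1 + w1, (cmap t).2 + w2).
    by apply: YTl; exists (cmap t); split => //; right; exists t.
  move: ezt => /= <-; rewrite /transl /cmap /=; congr (_, _); ring.
- left; exists (p, q); split => //.
  rewrite in_setE /nbrl /=; split.
    by apply: contraNneq gne => -[-> ->].
  exists (z.1 + w1, z.2 + w2); split; first exact: YTl.
  exists (t.1 + w1, t.2 + w2).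
    by apply: YTl; exists t; split => //; left.
  move: ezt => /= <-; rewrite /transl /=; congr (_, _); ring.
Qed.
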